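(* Let $\mathcal{F}$ be a fusion ring with structure constants $(N_{i,j}^k)$, index $1$ being the unit. Suppose indices $i_1,\dots,i_9$ satisfy $N_{i_4,i_1}^{i_6},\ N_{i_5,i_4}^{i_2},\ N_{i_5,i_6}^{i_3},\ N_{i_7,i_9}^{i_1},\ N_{i_2,i_7}^{i_8},\ N_{i_8,i_9}^{i_3}\neq0$ and $N_{i_2,i_1}^{i_3}=0$. Then $i_j\neq1$ for all $j\in\{4,\dots,9\}$.
   Context: A fusion ring is a ring which is a free $\mathbb{Z}$-module with finite basis $\{b_1,\dots,b_r\}$, $b_ib_j=\sum_kN_{i,j}^kb_k$, $N_{i,j}^k\in\mathbb{Z}_{\ge0}$, associative, unit $b_1$, duality $i\mapsto i^*$ with $N_{i,k}^1=N_{k,i}^1=\delta_{i^*,k}$, and Frobenius reciprocity $N_{i,j}^k=N_{i^*,k}^j=N_{k,j^*}^i$. *)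

(* Defs.v *)
From mathcomp Require Import all_boot.
Set Implicit Arguments. Unset Strict Implicit. Unset Printing Implicit Defensive.

(* A fusion ring of rank r, presented by its structure constants on the
   finite basis indexed by the finite type I; [one] is the index of the unit
   b_1, [dual] the duality i |-> i^*, and N i j k = N_{i,j}^k, i.e.
   b_i b_j = \sum_k N i j k b_k.  Nonnegativity is built in (nat). *)
Definition is_fusion_ring (I : finType) (one : I) (dual : I -> I)
    (N : I -> I -> I -> nat) : Prop :=
  (forall i j l m : I,
      \sum_(k : I) N i j k * N k l m = \sum_(k : I) N j l k * N i k m)
  /\ (forall j k : I, N one j k = (j == k) /\ N j one k = (j == k))
  /\ (forall i k : I, N i k one = (dual i == k) /\ N k i one = (dual i == k))
  /\ (forall i j k : I, N i j k = N (dual i) k j /\ N i j k = N k (dual j) i).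

(* Main.v *)
Require Import Defs.
From mathcomp Require Import all_boot.

Theorem lemma7p18 (I : finType) (one : I) (dual : I -> I)
    (N : I -> I -> I -> nat) :
  is_fusion_ring one dual N ->
  forall i1 i2 i3 i4 i5 i6 i7 i8 i9 : I,
    N i4 i1 i6 <> 0 -> N i5 i4 i2 <> 0 -> N i5 i6 i3 <> 0 ->
    N i7 i9 i1 <> 0 -> N i2 i7 i8 <> 0 -> N i8 i9 i3 <> 0 ->
    N i2 i1 i3 = 0 ->
    i4 <> one /\ i5 <> one /\ i6 <> one /\ i7 <> one /\ i8 <> one /\ i9 <> one.
Proof.
move=> [_ [U [D F]]] i1 i2 i3 i4 i5 i6 i7 i8 i9 h1 h2 h3 h4 h5 h6 h0.
have L : forall j k, N one j k <> 0 -> j = k.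
  by move=> j k; case: (U j k) => -> _; case: eqP.
have R : forall j k, N j one k <> 0 -> j = k.
  by move=> j k; case: (U j k) => _ ->; case: eqP.
have Dr : forall i k, N i k one <> 0 -> dual i = k.
  by move=> i k; case: (D i k) => -> _; case: eqP.
split; [|split; [|split; [|split; [|split]]]] => E.
- rewrite E in h1 h2; move/L: h1 => e1; move/R: h2 => e2.
  by apply: h3; rewrite -e1 e2.
- rewrite E in h2 h3; move/L: h2 => e1; move/L: h3 => e2.
  by apply: h1; rewrite e1 e2.
- rewrite E in h1 h3; move/Dr: h1 => e1; move/R: h3 => e2.
  by apply: h2; case: (F i5 i4 i2) => _ ->; rewrite e1 e2.
- rewrite E in h4 h5; move/L: h4 => e1; move/R: h5 => e2.
  by apply: h6; rewrite -e2 e1.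
- rewrite E in h5 h6; move/Dr: h5 => e1; move/L: h6 => e2.
  by apply: h4; rewrite -e1 e2; case: (F i2 i1 i3) => <- _.
- rewrite E in h4 h6; move/R: h4 => e1; move/R: h6 => e2.
  by apply: h5; rewrite e1 e2.
Qed.
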